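(* Let $p < q$ be primes and $n = pq$. Then the line graph $L(\Gamma(\mathbb{Z}_n))$ is very cost effective.
   Context: $\mathbb{Z}_n$ is the ring of residue classes modulo $n$. The zero-divisor graph $\Gamma(\mathbb{Z}_n)$ has as vertices the nonzero zero-divisors of $\mathbb{Z}_n$, two distinct vertices being adjacent iff their product is $0$. The line graph $L(G)$ of a simple graph $G$ has the edges of $G$ as vertices, two being adjacent iff the corresponding edges share an endpoint. For a graph $G=(V,E)$ and $S\subseteq V$, a vertex $v\in S$ is very cost effective if $|N(v)\cap S| < |N(v)\cap (V\setminus S)|$; $S$ is very cost effective if every vertex of $S$ is. A bipartition $\{S, V\setminus S\}$ is very cost effective if both parts are very cost effective, and $G$ is very cost effective if it has a very cost effective bipartition. *)

(* Defs.v *)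
From mathcomp Require Import all_boot.
Set Implicit Arguments. Unset Strict Implicit. Unset Printing Implicit Defensive.

(* A simple graph G = (V, E) is represented on an ambient finType T by a
   vertex set V : {set T} and an adjacency relation adj : rel T (only its
   restriction to V matters; adj is assumed symmetric and irreflexive on V
   for the graphs below, which holds by construction). *)

Definition nbhd (T : finType) (V : {set T}) (adj : rel T) (v : T) : {set T} :=
  [set u in V | adj v u].

Definition vce_vertex (T : finType) (V : {set T}) (adj : rel T)
    (S : {set T}) (v : T) : bool :=
  #|nbhd V adj v :&: S| < #|nbhd V adj v :&: (V :\: S)|.

Definition vce_set (T : finType) (V : {set T}) (adj : rel T) (S : {set T}) : bool :=
  [forall v in S, vce_vertex V adj S v].

Definition vce_bipartition (T : finType) (V : {set T}) (adj : rel T)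
    (S : {set T}) : bool :=
  [&& S \subset V, S != set0, V :\: S != set0,
      vce_set V adj S & vce_set V adj (V :\: S)].

Definition very_cost_effective (T : finType) (V : {set T}) (adj : rel T) : Prop :=
  exists S : {set T}, vce_bipartition V adj S.

Definition zmul (n : nat) (x y : 'I_n) : nat := (x * y) %% n.

Definition zd_vertices (n : nat) : {set 'I_n} :=
  [set x : 'I_n | (val x != 0) && [exists y : 'I_n, (val y != 0) && (zmul x y == 0)]].

Definition zd_adj (n : nat) : rel 'I_n := fun x y => (x != y) && (zmul x y == 0).

Definition line_vertices (T : finType) (V : {set T}) (adj : rel T) : {set {set T}} :=
  [set e : {set T} | [exists x in V, exists y in V,
      (x != y) && adj x y && (e == [set x; y])]].

Definition line_adj (T : finType) : rel {set T} :=
  fun e f => (e != f) && (e :&: f != set0).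

Definition zero_divisor_line_graph_vce (n : nat) : Prop :=
  very_cost_effective (line_vertices (zd_vertices n) (@zd_adj n)) (@line_adj _).

(* Main.v *)
Require Import Defs.
From mathcomp Require Import all_boot zify.
Set Implicit Arguments. Unset Strict Implicit. Unset Printing Implicit Defensive.

Lemma set2_eq (T : finType) (A B : {set T}) a a' b b' :
  [disjoint A & B] -> a \in A -> a' \in A -> b \in B -> b' \in B ->
  [set a; b] = [set a'; b'] -> a = a' /\ b = b'.
Proof.
move=> dAB aA a'A bB b'B E.
have ha : a \in [set a'; b'] by rewrite -E set21.
have hb : b \in [set a'; b'] by rewrite -E set22.
case/set2P: ha => [ha|ha]; last by subst; rewrite (disjointFr dAB aA) in b'B.
case/set2P: hb => [hb|hb]; first by subst; rewrite (disjointFr dAB a'A) in bB.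
by [].
Qed.

Lemma edge_char (T : finType) (A B : {set T}) (adj : rel T) :
  [disjoint A & B] ->
  (forall x y, x \in A :|: B -> y \in A :|: B ->
     adj x y = ((x \in A) && (y \in B)) || ((x \in B) && (y \in A))) ->
  forall f, (f \in line_vertices (A :|: B) adj) =
            [exists a in A, exists b in B, f == [set a; b]].
Proof.
move=> dAB hadj f; rewrite inE; apply/idP/idP.
- case/existsP => x /andP[xV /existsP[y /andP[yV /andP[/andP[xy axy] /eqP->]]]].
  rewrite hadj // in axy; case/orP: axy => /andP[xA yB].
    by apply/existsP; exists x; rewrite xA; apply/existsP; exists y; rewrite yB eqxx.
  by apply/existsP; exists y; rewrite yB; apply/existsP; exists x; rewrite xA setUC eqxx.
- case/existsP => a /andP[aA /existsP[b /andP[bB /eqP->]]].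
  apply/existsP; exists a; rewrite inE aA /=; apply/existsP; exists b.
  rewrite inE bB orbT eqxx andbT hadj ?inE ?aA ?bB ?orbT // /= andbT.
  by apply/eqP => ab; subst; rewrite (disjointFr dAB aA) in bB.
Qed.

Lemma edge_char' (T : finType) (A B : {set T}) (adj : rel T) :
  [disjoint A & B] ->
  (forall x y, x \in A :|: B -> y \in A :|: B ->
     adj x y = ((x \in A) && (y \in B)) || ((x \in B) && (y \in A))) ->
  forall f, [exists x in A :|: B, exists y in A :|: B, (x != y) && adj x y && (f == [set x; y])] =
            [exists a in A, exists b in B, f == [set a; b]].
Proof. by move=> dAB hadj f; have := edge_char dAB hadj f; rewrite inE. Qed.


Lemma nbhd_count (T : finType) (A B : {set T}) (adj : rel T) :
  [disjoint A & B] ->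
  (forall x y, x \in A :|: B -> y \in A :|: B ->
     adj x y = ((x \in A) && (y \in B)) || ((x \in B) && (y \in A))) ->
  forall a b, a \in A -> b \in B -> forall X : {set {set T}},
  #|nbhd (line_vertices (A :|: B) adj) (@line_adj T) [set a; b] :&: X| =
  #|[set b' in B | (b' != b) && ([set a; b'] \in X)]| +
  #|[set a' in A | (a' != a) && ([set a'; b] \in X)]|.
Proof.
move=> dAB hadj a b aA bB X.
have hE := edge_char' dAB hadj.
pose R1 := [set [set a; b'] | b' in [set b' in B | (b' != b) && ([set a; b'] \in X)]].
pose R2 := [set [set a'; b] | a' in [set a' in A | (a' != a) && ([set a'; b] \in X)]].
have E : nbhd (line_vertices (A :|: B) adj) (@line_adj T) [set a; b] :&: X = R1 :|: R2.
  apply/setP => f; rewrite !inE /line_adj; apply/idP/idP.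
  - case/andP => /andP[] + /andP[ne /set0Pn[x xin]].
    rewrite hE => /existsP[a' /andP[a'A /existsP[b' /andP[b'B /eqP fE]]]] fX.
    subst f; move: xin; rewrite !inE => /andP[].
    case/orP => /eqP ->; case/orP => /eqP xe.
    + subst; apply/orP; left; apply/imsetP; exists b' => //.
      rewrite !inE b'B fX andbT; apply/eqP => bb; subst; by rewrite eqxx in ne.
    + subst; by rewrite (disjointFr dAB aA) in b'B.
    + subst; by rewrite (disjointFr dAB a'A) in bB.
    + subst; apply/orP; right; apply/imsetP; exists a' => //.
      rewrite !inE a'A fX andbT; apply/eqP => bb; subst; by rewrite eqxx in ne.
  - case/orP => /imsetP[c]; rewrite !inE => /andP[cB /andP[ne cX]] ->.
    + rewrite cX andbT hE; apply/andP; split.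
        by apply/existsP; exists a; rewrite aA; apply/existsP; exists c; rewrite cB eqxx.
      apply/andP; split; last by apply/set0Pn; exists a; rewrite !inE eqxx.
      apply/negP => /eqP /(set2_eq dAB aA aA bB cB) [_ bc]; by rewrite bc eqxx in ne.
    + rewrite cX andbT hE; apply/andP; split.
        by apply/existsP; exists c; rewrite cB; apply/existsP; exists b; rewrite bB eqxx.
      apply/andP; split; last by apply/set0Pn; exists b; rewrite !inE eqxx !orbT.
      apply/negP => /eqP /(set2_eq dAB aA cB bB bB) [ac _]; by rewrite ac eqxx in ne.
rewrite E cardsU.
have -> : R1 :&: R2 = set0.
  apply/setP => f; rewrite !inE; apply/negP => /andP[/imsetP[c + ->] /imsetP[d]].
  rewrite !inE => /andP[cB _] /andP[dA /andP[ne _]] /(set2_eq dAB aA dA cB bB) [].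
  by move=> ad _; rewrite ad eqxx in ne.
rewrite cards0 subn0 !card_in_imset //.
- move=> x y; rewrite !inE => /andP[xA _] /andP[yA _] /(set2_eq dAB xA yA bB bB); by case.
- move=> x y; rewrite !inE => /andP[xB _] /andP[yB _] /(set2_eq dAB aA aA xB yB); by case.
Qed.


Lemma cnt1 (T : finType) (A : {set T}) (P : pred T) x :
  x \in A -> P x ->
  #|[set y in A | P y]| = (#|[set y in A | (y != x) && P y]|).+1.
Proof.
move=> xA Px; rewrite (cardsD1 x) !inE xA Px add1n; congr (_.+1).
by apply: eq_card => y; rewrite !inE; case: (y != x); case: (y \in A).
Qed.

Lemma cnt2 (T : finType) (A : {set T}) (P : pred T) x :
  P x -> [set y in A | (y != x) && ~~ P y] = [set y in A | ~~ P y].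
Proof.
by move=> Px; apply/setP => y; rewrite !inE; case: eqP => //= ->; rewrite Px andbF.
Qed.

Lemma vce_side (T : finType) (A B : {set T}) (adj : rel T) (g : T -> bool)
  (X : {set {set T}}) (s : bool) :
  [disjoint A & B] ->
  (forall x y, x \in A :|: B -> y \in A :|: B ->
     adj x y = ((x \in A) && (y \in B)) || ((x \in B) && (y \in A))) ->
  (forall c, #|[set x in A | g x == c]| = #|[set x in A | g x != c]|) ->
  (forall c, #|[set x in B | g x == c]| <= (#|[set x in B | g x != c]|).+1) ->
  X \subset line_vertices (A :|: B) adj ->
  (forall a b, a \in A -> b \in B -> ([set a; b] \in X) = ((g a != g b) == s)) ->
  vce_set (line_vertices (A :|: B) adj) (@line_adj T) X.
Proof.
move=> dAB hadj hA hB sX hX.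
apply/forallP => e; apply/implyP => eX.
have := subsetP sX e eX; rewrite edge_char //.
case/existsP => a /andP[aA /existsP[b /andP[bB /eqP ee]]]; subst e.
rewrite /vce_vertex !nbhd_count //.
have hs : s = (g a != g b) by rewrite hX // in eX; rewrite (eqP eX).
subst s.
have E1 : [set b' in B | (b' != b) && ([set a; b'] \in X)] =
          [set b' in B | (b' != b) && (g b' == g b)].
  apply/setP => y; rewrite !inE; case yB: (y \in B) => //=; rewrite hX //.
  by case: (g a); case: (g y); case: (g b).
have E2 : [set a' in A | (a' != a) && ([set a'; b] \in X)] =
          [set a' in A | (a' != a) && (g a' == g a)].
  apply/setP => y; rewrite !inE; case yA: (y \in A) => //=; rewrite hX //.
  by case: (g a); case: (g y); case: (g b).
have E3 : [set b' in B | (b' != b) && ([set a; b'] \in line_vertices (A :|: B) adj :\: X)] =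
          [set b' in B | (b' != b) && ~~ (g b' == g b)].
  apply/setP => y; rewrite !inE; case yB: (y \in B) => //=.
  rewrite edge_char' //.
  have -> : [exists a0 in A, exists b0 in B, [set a; y] == [set a0; b0]].
    by apply/existsP; exists a; rewrite aA; apply/existsP; exists y; rewrite yB eqxx.
  rewrite hX //.
  by case: (g a); case: (g y); case: (g b).
have E4 : [set a' in A | (a' != a) && ([set a'; b] \in line_vertices (A :|: B) adj :\: X)] =
          [set a' in A | (a' != a) && ~~ (g a' == g a)].
  apply/setP => y; rewrite !inE; case yA: (y \in A) => //=.
  rewrite edge_char' //.
  have -> : [exists a0 in A, exists b0 in B, [set y; b] == [set a0; b0]].
    by apply/existsP; exists y; rewrite yA; apply/existsP; exists b; rewrite bB eqxx.
  rewrite hX //.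
  by case: (g a); case: (g y); case: (g b).
rewrite E1 E2 E3 E4.
rewrite (@cnt2 _ B (fun y => g y == g b) b) ?eqxx // (@cnt2 _ A (fun y => g y == g a) a) ?eqxx //.
have h1 := @cnt1 _ B (fun y => g y == g b) b bB (eqxx _).
have h2 := @cnt1 _ A (fun y => g y == g a) a aA (eqxx _).
have h3 := hA (g a). have h4 := hB (g b).
simpl in *. lia.
Qed.


Lemma abstract_vce (T : finType) (A B : {set T}) (adj : rel T) (g : T -> bool)
  (S : {set {set T}}) :
  [disjoint A & B] ->
  (forall x y, x \in A :|: B -> y \in A :|: B ->
     adj x y = ((x \in A) && (y \in B)) || ((x \in B) && (y \in A))) ->
  (forall c, #|[set x in A | g x == c]| = #|[set x in A | g x != c]|) ->
  (forall c, #|[set x in B | g x == c]| <= (#|[set x in B | g x != c]|).+1) ->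
  S \subset line_vertices (A :|: B) adj ->
  (forall a b, a \in A -> b \in B -> ([set a; b] \in S) = (g a != g b)) ->
  forall a0 b0, a0 \in A -> b0 \in B ->
  vce_bipartition (line_vertices (A :|: B) adj) (@line_adj T) S.
Proof.
move=> dAB hadj hA hB sS hS a0 b0 a0A b0B.
have [a1 [a1A ga1]] : exists a1, a1 \in A /\ g a1 != g a0.
  have := hA (g a0).
  have := @cnt1 _ A (fun y => g y == g a0) a0 a0A (eqxx _); simpl => -> /esym E.
  have : 0 < #|[set x in A | g x != g a0]| by rewrite E.
  case/card_gt0P => x.
  by rewrite inE => /andP[xA gx]; exists x.
have Ledge : forall a b, a \in A -> b \in B -> [set a; b] \in line_vertices (A :|: B) adj.
  move=> a b aA bB; rewrite edge_char //; apply/existsP; exists a; rewrite aA.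
  by apply/existsP; exists b; rewrite bB eqxx.
rewrite /vce_bipartition sS /=; apply/and4P; split.
- apply/set0Pn.
  case: (boolP (g a0 != g b0)) => h; first by exists [set a0; b0]; rewrite hS.
  exists [set a1; b0]; rewrite hS //; move: h ga1.
  by case: (g a0); case: (g a1); case: (g b0).
- apply/set0Pn.
  case: (boolP (g a0 != g b0)) => h; last by exists [set a0; b0]; rewrite inE hS // h Ledge.
  exists [set a1; b0]; rewrite inE hS // Ledge // andbT; move: h ga1.
  by case: (g a0); case: (g a1); case: (g b0).
- apply: (@vce_side _ A B adj g S true) => //.
  by move=> a b aA bB; rewrite hS // eqb_id.
- apply: (@vce_side _ A B adj g _ false) => //; first exact: subsetDl.
  by move=> a b aA bB; rewrite inE hS // Ledge // andbT eqbF_neg.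
Qed.


Definition Mset (n p : nat) : {set 'I_n} := [set x : 'I_n | (nat_of_ord x != 0) && (p %| nat_of_ord x)].

Lemma zero_both p q x : prime p -> prime q -> p < q -> x < p * q -> p %| x -> q %| x -> x = 0.
Proof.
move=> pP qP pq xn px qx.
have cpq : coprime p q by rewrite prime_coprime // dvdn_prime2 // neq_ltn pq.
have : p * q %| x by rewrite Gauss_dvd // px qx.
case: x xn {px qx} => // x xn /dvdn_leq; lia.
Qed.

Lemma zd_split p q : prime p -> prime q -> p < q ->
  zd_vertices (p * q) = Mset (p * q) p :|: Mset (p * q) q.
Proof.
move=> pP qP pq.
have p1 := prime_gt1 pP; have q1 := prime_gt1 qP.
apply/setP => x; rewrite !inE; case x0: (val x != 0) => //=.
apply/idP/idP.
- case/existsP => y /andP[y0]; rewrite /zmul -/(dvdn _ _) => hd.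
  have hp : p %| x * y by apply: dvdn_trans hd; apply: dvdn_mulr.
  have hq : q %| x * y by apply: dvdn_trans hd; apply: dvdn_mull.
  rewrite Euclid_dvdM // in hp; rewrite Euclid_dvdM // in hq.
  case px: (p %| x) => //=; case qx: (q %| x) => //=.
  rewrite px /= in hp; rewrite qx /= in hq.
  have := zero_both pP qP pq (ltn_ord y) hp hq; move: y0; lia.
- have pn : p < p * q by rewrite -{1}(muln1 p) ltn_pmul2l; lia.
  have qn : q < p * q by rewrite -{1}(mul1n q) ltn_pmul2r; lia.
  case/orP => hx.
  + apply/existsP; exists (Ordinal qn) => /=; rewrite /zmul -/(dvdn _ _).
    apply/andP; split; first lia.
    by apply: dvdn_mul.
  + apply/existsP; exists (Ordinal pn) => /=; rewrite /zmul -/(dvdn _ _).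
    apply/andP; split; first lia.
    apply: (@dvdn_trans (q * p)); first by rewrite mulnC.
    by apply: dvdn_mul.
Qed.


Lemma M_disj p q : prime p -> prime q -> p < q ->
  [disjoint Mset (p * q) p & Mset (p * q) q].
Proof.
move=> pP qP pq; rewrite -setI_eq0; apply/eqP/setP => x; rewrite !inE.
apply/negP => /andP[/andP[x0 px] /andP[_ qx]].
have := zero_both pP qP pq (ltn_ord x) px qx. move: x0. lia.
Qed.

Lemma M_adj p q : prime p -> prime q -> p < q ->
  forall x y, x \in Mset (p * q) p :|: Mset (p * q) q -> y \in Mset (p * q) p :|: Mset (p * q) q ->
  zd_adj x y = ((x \in Mset (p * q) p) && (y \in Mset (p * q) q)) ||
               ((x \in Mset (p * q) q) && (y \in Mset (p * q) p)).
Proof.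
move=> pP qP pq x y.
have dj := M_disj pP qP pq.
have hn : forall z : 'I_(p * q), z \in Mset (p * q) p -> z \in Mset (p * q) q -> False.
  by move=> z zp zq; rewrite (disjointFr dj zp) in zq.
rewrite /zd_adj /zmul -/(dvdn _ _).
case/setUP => hx; case/setUP => hy.
- rewrite (disjointFr dj hx) (disjointFr dj hy) /= andbF.
  apply/negP => /andP[_ hd].
  have : q %| x * y by apply: dvdn_trans hd; apply: dvdn_mull.
  rewrite Euclid_dvdM // => /orP[] hq.
  + by apply: (hn x) => //; move: hx; rewrite !inE => /andP[-> _].
  + by apply: (hn y) => //; move: hy; rewrite !inE => /andP[-> _].
- rewrite hx hy /=; apply/andP; split.
    by apply/eqP => e; subst; apply: (hn y).
  move: hx hy; rewrite !inE => /andP[_ px] /andP[_ qy]; exact: dvdn_mul.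
- rewrite hx hy /= ?andbT ?orbT; apply/andP; split.
    by apply/eqP => e; subst; apply: (hn y).
  move: hx hy; rewrite !inE => /andP[_ qx] /andP[_ py].
  apply: (@dvdn_trans (q * p)); first by rewrite mulnC.
  by apply: dvdn_mul.
- rewrite (disjointFl dj hx) (disjointFl dj hy) /= andbF.
  apply/negP => /andP[_ hd].
  have : p %| x * y by apply: dvdn_trans hd; apply: dvdn_mulr.
  rewrite Euclid_dvdM // => /orP[] hq.
  + by apply: (hn x) => //; move: hx; rewrite !inE => /andP[-> _].
  + by apply: (hn y) => //; move: hy; rewrite !inE => /andP[-> _].
Qed.


Definition nu n (npos : 0 < n) (x : 'I_n) : 'I_n := Ordinal (ltn_pmod (n - x) npos).

Lemma nu_val n (npos : 0 < n) (x : 'I_n) : nat_of_ord x != 0 -> nat_of_ord (nu npos x) = n - x.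
Proof. move=> x0 /=; rewrite modn_small //; have := ltn_ord x; lia. Qed.

Lemma nu_inv n (npos : 0 < n) (x : 'I_n) : nat_of_ord x != 0 -> nu npos (nu npos x) = x.
Proof.
move=> x0; apply: ord_inj; rewrite nu_val ?nu_val //; have := ltn_ord x; lia.
Qed.

Lemma bal1 n (npos : 0 < n) (X : {set 'I_n}) :
  (forall x, x \in X -> (nat_of_ord x != 0) && (nu npos x \in X)) ->
  #|[set x in X | 2 * x < n]| <= #|[set x in X | ~~ (2 * x < n)]|.
Proof.
move=> hX.
apply: (leq_trans _ (leq_imset_card (nu npos) _)).
apply: subset_leq_card; apply/subsetP => x; rewrite inE => /andP[xX gx].
have /andP[x0 nX] := hX x xX.
apply/imsetP; exists (nu npos x); last by rewrite nu_inv.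
rewrite inE nX /= modn_small; have := ltn_ord x; lia.
Qed.

Lemma bal2 n (npos : 0 < n) (X : {set 'I_n}) :
  (forall x, x \in X -> (nat_of_ord x != 0) && (nu npos x \in X)) ->
  #|[set x in X | ~~ (2 * x < n)]| <= #|[set x in X | 2 * x < n]| + #|[set x in X | 2 * x == n]|.
Proof.
move=> hX.
apply: (leq_trans _ (leq_add (leq_imset_card (nu npos) [set x in X | 2 * x < n]) (leqnn _))).
apply: (leq_trans _ (leq_trans (eq_leq (cardsU _ _)) (leq_subr _ _))).
apply: subset_leq_card; apply/subsetP => x; rewrite inE => /andP[xX gx].
have /andP[x0 nX] := hX x xX.
rewrite inE; case e: (2 * x == n); first by rewrite inE xX e orbT.
apply/orP; left.
apply/imsetP; exists (nu npos x); last by rewrite nu_inv.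
rewrite inE nX /= modn_small; have := ltn_ord x; move: e gx; lia.
Qed.


Lemma card2sel (T : finType) (a b : T) (g : pred T) :
  a != b -> #|[set x in [set a; b] | g x]| = g a + g b.
Proof.
move=> ab.
case ga: (g a); case gb: (g b).
- have -> : [set x in [set a; b] | g x] = [set a; b].
    apply/setP => x; rewrite !inE; case xa: (x == a); case xb: (x == b); rewrite /= ?(eqP xa) ?(eqP xb) ?ga ?gb ?xa ?xb ?eqxx //;
    by move: ab; rewrite -(eqP xa) -(eqP xb) eqxx.
  by rewrite cards2 ab.
- have -> : [set x in [set a; b] | g x] = [set a].
    apply/setP => x; rewrite !inE; case xa: (x == a); case xb: (x == b); rewrite /= ?(eqP xa) ?(eqP xb) ?ga ?gb ?xa ?xb ?eqxx //;
    by move: ab; rewrite -(eqP xa) -(eqP xb) eqxx.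
  by rewrite cards1.
- have -> : [set x in [set a; b] | g x] = [set b].
    apply/setP => x; rewrite !inE; case xa: (x == a); case xb: (x == b); rewrite /= ?(eqP xa) ?(eqP xb) ?ga ?gb ?xa ?xb ?eqxx //;
    by move: ab; rewrite -(eqP xa) -(eqP xb) eqxx.
  by rewrite cards1.
- have -> : [set x in [set a; b] | g x] = set0.
    apply/setP => x; rewrite !inE; case xa: (x == a); case xb: (x == b); rewrite /= ?(eqP xa) ?(eqP xb) ?ga ?gb ?xa ?xb ?eqxx //;
    by move: ab; rewrite -(eqP xa) -(eqP xb) eqxx.
  by rewrite cards0.
Qed.

Lemma setc (T : finType) (X : {set T}) (P : pred T) (c : bool) :
  [set x in X | P x == c] = if c then [set x in X | P x] else [set x in X | ~~ P x].
Proof. by case: c; apply/setP => x; rewrite !inE; case: (P x). Qed.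

Lemma setc' (T : finType) (X : {set T}) (P : pred T) (c : bool) :
  [set x in X | P x != c] = if c then [set x in X | ~~ P x] else [set x in X | P x].
Proof. by case: c; apply/setP => x; rewrite !inE; case: (P x). Qed.


Theorem mainTheorem4 (p q : nat) :
  prime p -> prime q -> p < q ->
  very_cost_effective
    (line_vertices (zd_vertices (p * q)) (@zd_adj (p * q)))
    (@line_adj 'I_(p * q)).
Proof.
move=> pP qP pq.
have p1 := prime_gt1 pP; have q1 := prime_gt1 qP.
have npos : 0 < p * q by rewrite muln_gt0; lia.
have pn : p < p * q by rewrite -{1}(muln1 p) ltn_pmul2l; lia.
have qn : q < p * q by rewrite -{1}(mul1n q) ltn_pmul2r; lia.
rewrite zd_split //.
have dj := M_disj pP qP pq.
have hadj := M_adj pP qP pq.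
pose g := fun x : 'I_(p * q) => 2 * x < p * q.
pose S := [set e in line_vertices (Mset (p * q) p :|: Mset (p * q) q) (@zd_adj (p * q)) |
            #|[set x in e | g x]| == 1].
exists S.
have clos : forall r, r %| p * q -> forall x, x \in Mset (p * q) r ->
    (nat_of_ord x != 0) && (nu npos x \in Mset (p * q) r).
  move=> r rn x; rewrite !inE => /andP[x0 rx]; rewrite x0 /= modn_small; last by have := ltn_ord x; lia.
  rewrite dvdn_sub // andbT; have := ltn_ord x; lia.
have cA := clos p (dvdn_mulr _ (dvdnn _)).
have cB := clos q (dvdn_mull _ (dvdnn _)).
have hA0 : #|[set x in Mset (p * q) p | 2 * x == p * q]| = 0.
  apply/eqP; rewrite cards_eq0; apply/eqP/setP => x; rewrite !inE.
  apply/negP => /andP[/andP[x0 px] /eqP e].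
  have : q %| 2 * x by rewrite e dvdn_mull.
  rewrite Euclid_dvdM // => /orP[q2|qx].
    by have := dvdn_leq (isT : 0 < 2) q2; lia.
  have := zero_both pP qP pq (ltn_ord x) px qx; move: x0; lia.
have hB1 : #|[set x in Mset (p * q) q | 2 * x == p * q]| <= 1.
  case: (set_0Vmem [set x in Mset (p * q) q | 2 * x == p * q]) => [->|[y yS]].
    by rewrite cards0.
  have sub : [set x in Mset (p * q) q | 2 * x == p * q] \subset [set y].
    apply/subsetP => x xS.
    move: xS yS; rewrite !inE => /andP[_ /eqP ex] /andP[_ /eqP ey].
    apply/eqP; apply: ord_inj; lia.
  by rewrite (leq_trans (subset_leq_card sub)) // cards1.
apply: (@abstract_vce _ _ _ _ g S dj hadj _ _ _ _ (Ordinal pn) (Ordinal qn)).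
- move=> c; rewrite setc setc'.
  have h1 := bal1 cA; have h2 := bal2 cA.
  rewrite hA0 addn0 in h2.
  by case: c; apply/eqP; rewrite eqn_leq ?h1 ?h2.
- move=> c; rewrite setc setc'.
  have h1 := bal1 cB; have h2 := bal2 cB.
  case: c.
    by apply: (leq_trans h1).
  apply: (leq_trans h2); have e : forall a b c : nat, a = c -> b <= 1 -> a + b <= c.+1 by move=> *; lia.
  by apply: e hB1.
- by apply/subsetP => e; rewrite inE => /andP[].
- move=> a b aA bB.
  have ab : a != b by apply/eqP => e; subst; rewrite (disjointFr dj aA) in bB.
  rewrite inE card2sel //.
  have -> : [set a; b] \in line_vertices (Mset (p * q) p :|: Mset (p * q) q) (@zd_adj (p * q)).
    rewrite edge_char //; apply/existsP; exists a; rewrite aA.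
    by apply/existsP; exists b; rewrite bB eqxx.
  by case: (g a); case: (g b).
- by rewrite inE /=; apply/andP; split; [lia| exact: dvdnn].
- by rewrite inE /=; apply/andP; split; [lia| exact: dvdnn].
Qed.
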